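(* Let $H_0,H_1$ be complex Hilbert spaces, $G$ a densely defined closed operator from $H_0$ into $H_1$ and $D$ a densely defined closed operator from $H_1$ into $H_0$ with $-G^*\subset D$. Let $m\in\mathcal L(H_0)$ (not necessarily coercive), $a\in\mathcal L(H_1)$ coercive, $H$ a Hilbert space and $\kappa\in\mathcal L(\mathrm{BD}(G),H)$ injective with dense range. Define $j=\kappa\circ\pi_{\mathrm{BD}(G)}\colon\mathrm{dom}(G)\to H$ and $\mathfrak b(u,v)=(aGu,Gv)_{H_1}+(mu,v)_{H_0}$ for $u,v\in\mathrm{dom}(G)$. Then the Dirichlet-to-Neumann graph $\Lambda_H$ in $H$ associated with $-DaG+m$ satisfies \[ \Lambda_H=\{(\varphi,\psi)\in H\times H:\exists u\in\mathrm{dom}(G)\text{ with }j(u)=\varphi\text{ and }\mathfrak b(u,v)=(\psi,j(v))_H\text{ for all }v\in\mathrm{dom}(G)\}. \]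
   Context: $\mathring D=-G^*$, $\mathring G=-D^*$. Domains carry graph inner products. $\mathrm{BD}(G)$ (resp. $\mathrm{BD}(D)$) is the orthogonal complement of $\mathrm{dom}(\mathring G)$ in $\mathrm{dom}(G)$ (resp. of $\mathrm{dom}(\mathring D)$ in $\mathrm{dom}(D)$) with induced inner products; $\pi_{\mathrm{BD}(G)},\pi_{\mathrm{BD}(D)}$ the orthogonal projections. $G$ maps $\mathrm{BD}(G)$ into $\mathrm{BD}(D)$. Coercive: $\mathrm{Re}(ax,x)\ge\mu\|x\|^2$ for some $\mu>0$. The Dirichlet-to-Neumann graph is $\Lambda=\{(\pi_{\mathrm{BD}(G)}u,\pi_{\mathrm{BD}(D)}aGu): u\in\mathrm{dom}(G),\ aGu\in\mathrm{dom}(D),\ mu-DaGu=0\}$, and $\Lambda_H=\{(\varphi,\psi)\in H\times H:\exists u_0\in\mathrm{BD}(G),\ \kappa(u_0)=\varphi,\ (u_0,G\kappa^*\psi)\in\Lambda\}$ with $\kappa^*\colon H\to\mathrm{BD}(G)$ the adjoint of $\kappa$. *)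

(* Defs.v *)
From HB Require Import structures.
From mathcomp Require Import all_boot all_order all_algebra.
From mathcomp Require Import reals complex.
From Stdlib Require Import ClassicalEpsilon.

Set Implicit Arguments.
Unset Strict Implicit.
Unset Printing Implicit Defensive.

Import Order.TTheory GRing.Theory Num.Theory.
Local Open Scope ring_scope.

Section Hilbert.
Variable R : realType.
Local Notation C := (R[i]).

Section OneSpace.
Variable V : lmodType C.
Variable ip : V -> V -> C.

Definition ipnorm (x : V) : R := Num.sqrt (complex.Re (ip x x)).

Definition hilbert_ip : Prop :=
  [/\ (forall (a : C) (x y z : V), ip (a *: x + y) z = a * ip x z + ip y z),
      (forall x y : V, ip y x = conjc (ip x y)),
      (forall x : V, 0 <= ip x x),
      (forall x : V, ip x x = 0 -> x = 0)
    & (forall u : nat -> V,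
        (forall e : R, 0 < e -> exists N : nat, forall n m : nat,
           (N <= n)%N -> (N <= m)%N -> ipnorm (u n - u m) < e) ->
        exists l : V, forall e : R, 0 < e -> exists N : nat, forall n : nat,
           (N <= n)%N -> ipnorm (u n - l) < e)].

Definition subspace (S : V -> Prop) : Prop :=
  S 0 /\ forall (a : C) (x y : V), S x -> S y -> S (a *: x + y).

Definition dense (S : V -> Prop) : Prop :=
  forall (x : V) (e : R), 0 < e -> exists y, S y /\ ipnorm (x - y) < e.

Definition bounded_op (f : {linear V -> V}) : Prop :=
  exists c : R, forall x, ipnorm (f x) <= c * ipnorm x.

Definition coercive (f : V -> V) : Prop :=
  exists mu : R, 0 < mu /\ forall x, mu * ipnorm x ^+ 2 <= complex.Re (ip (f x) x).

Definition is_orth_proj (gip : V -> V -> C) (S : V -> Prop) (u w : V) : Prop :=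
  S w /\ forall z, S z -> gip (u - w) z = 0.

Definition orth_proj (gip : V -> V -> C) (S : V -> Prop) (u : V) : V :=
  epsilon (inhabits (0 : V)) (is_orth_proj gip S u).
End OneSpace.

Record op (V W : lmodType C) : Type := Op {
  dom : V -> Prop;
  app : V -> W }.

Section Operators.
Variables (V W : lmodType C) (ipV : V -> V -> C) (ipW : W -> W -> C).

Definition dd_closed (A : op V W) : Prop :=
  [/\ subspace (dom A),
      (forall (a : C) x y, dom A x -> dom A y ->
          app A (a *: x + y) = a *: app A x + app A y),
      dense ipV (dom A)
    & (forall (x : V) (y : W),
        (forall e : R, 0 < e -> exists z, dom A z /\
            ipnorm ipV (x - z) + ipnorm ipW (y - app A z) < e) ->
        dom A x /\ app A x = y)].

Definition adj_graph (A : op V W) (y : W) (z : V) : Prop :=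
  forall x, dom A x -> ipW (app A x) y = ipV x z.

Definition neg_adj_sub (A : op V W) (B : op W V) : Prop :=
  forall y z, adj_graph A y z -> dom B y /\ app B y = - z.

Definition dom_neg_adj (A : op V W) (y : W) : Prop := exists z, adj_graph A y z.

Definition graph_ip (A : op V W) (x y : V) : C := ipV x y + ipW (app A x) (app A y).

(* boundary space BD(A) := orthogonal complement, in dom A with the graph inner
   product, of the domain Adom of the "ring" operator *)
Definition BD (A : op V W) (Adom : V -> Prop) (x : V) : Prop :=
  dom A x /\ forall y, Adom y -> graph_ip A x y = 0.
End Operators.

Section DtN.
Variables (H0 H1 H : lmodType C)
  (ip0 : H0 -> H0 -> C) (ip1 : H1 -> H1 -> C) (ipH : H -> H -> C)
  (G : op H0 H1) (D : op H1 H0).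

(* dom(G-ring) = dom(-D adjoint),  dom(D-ring) = dom(-G adjoint) *)
Definition BDG : H0 -> Prop := BD ip0 ip1 G (dom_neg_adj ip1 ip0 D).
Definition BDD : H1 -> Prop := BD ip1 ip0 D (dom_neg_adj ip0 ip1 G).
Definition projG : H0 -> H0 := orth_proj (graph_ip ip0 ip1 G) BDG.
Definition projD : H1 -> H1 := orth_proj (graph_ip ip1 ip0 D) BDD.

Definition DtN_graph (a : H1 -> H1) (m : H0 -> H0) (u0 : H0) (f0 : H1) : Prop :=
  exists u, [/\ dom G u, dom D (a (app G u)),
              m u - app D (a (app G u)) = 0,
              projG u = u0 & projD (a (app G u)) = f0].

Definition bounded_on_BDG (kappa : H0 -> H) : Prop :=
  (forall (c : C) x y, BDG x -> BDG y -> kappa (c *: x + y) = c *: kappa x + kappa y) /\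
  exists c : R, forall x, BDG x -> ipnorm ipH (kappa x) <= c * ipnorm (graph_ip ip0 ip1 G) x.

Definition kappa_adj (kappa : H0 -> H) (psi : H) : H0 :=
  epsilon (inhabits (0 : H0))
    (fun w => BDG w /\ forall u, BDG u -> ipH (kappa u) psi = graph_ip ip0 ip1 G u w).

Definition DtN_graph_H (a : H1 -> H1) (m : H0 -> H0) (kappa : H0 -> H) (phi psi : H) : Prop :=
  exists u0, [/\ BDG u0, kappa u0 = phi & DtN_graph a m u0 (app G (kappa_adj kappa psi))].
End DtN.
End Hilbert.

(* Main.v *)
Require Import Defs.
From mathcomp Require Import all_boot all_order all_algebra.
From mathcomp Require Import classical_sets reals complex.
From mathcomp Require Import ring lra.
From Stdlib Require Import ClassicalEpsilon.
Set Implicit Arguments.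
Unset Strict Implicit.
Unset Printing Implicit Defensive.
Import Order.TTheory GRing.Theory Num.Theory.
Local Open Scope ring_scope.
Local Open Scope complex_scope.

Section Cplx.
Variable R : realType.
Local Notation C := R[i].
Local Notation Re := complex.Re.
Local Notation Im := complex.Im.

Lemma ReD (x y : C) : Re (x + y) = Re x + Re y.
Proof. by case: x => a b; case: y. Qed.
Lemma ImD (x y : C) : Im (x + y) = Im x + Im y.
Proof. by case: x => a b; case: y. Qed.
Lemma ReN (x : C) : Re (- x) = - Re x.
Proof. by case: x. Qed.
Lemma ReM (x y : C) : Re (x * y) = Re x * Re y - Im x * Im y.
Proof. case: x => a b; case: y => c d /=. ring. Qed.
Lemma ImM (x y : C) : Im (x * y) = Re x * Im y + Im x * Re y.
Proof. case: x => a b; case: y => c d /=. ring. Qed.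
Lemma ReJ (x : C) : Re (conjc x) = Re x.
Proof. by case: x. Qed.
Lemma ImJ (x : C) : Im (conjc x) = - Im x.
Proof. by case: x. Qed.
Lemma ReR (a : R) : Re (a%:C) = a. Proof. by []. Qed.
Lemma ImR (a : R) : Im (a%:C) = 0. Proof. by []. Qed.
Lemma Re0 : Re (0 : C) = 0. Proof. by []. Qed.
Lemma Im0 : Im (0 : C) = 0. Proof. by []. Qed.
Lemma C_ext (x y : C) : Re x = Re y -> Im x = Im y -> x = y.
Proof. by case: x => a b; case: y => c d /= -> ->. Qed.
Lemma ge0C (z : C) : 0 <= z -> Im z = 0 /\ 0 <= Re z.
Proof. by rewrite lecE /= => /andP[/eqP -> ->]. Qed.
Lemma ge0C_real (z : C) : 0 <= z -> z = (Re z)%:C.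
Proof. move=> /ge0C [hi _]; apply: C_ext => //=. Qed.
Lemma ReMR (z : C) (a : R) : Re (z * a%:C) = Re z * a.
Proof. rewrite ReM /=; ring. Qed.
Lemma ReJM (z : C) : Re (conjc z * z) = Re z ^+ 2 + Im z ^+ 2.
Proof. rewrite ReM ReJ ImJ; ring. Qed.
Lemma ImJM (z : C) : Im (conjc z * z) = 0.
Proof. rewrite ImM ReJ ImJ; ring. Qed.
Lemma ReJM_gt0 (z : C) : z != 0 -> 0 < Re (conjc z * z).
Proof.
move=> nz; rewrite ReJM.
have [h|h] := boolP ((Re z == 0) && (Im z == 0)).
  case/andP: h => /eqP h1 /eqP h2; case/eqP: nz; apply: C_ext; by rewrite ?h1 ?h2.
move: h; rewrite negb_and => /orP [] h.
  have : 0 < Re z ^+ 2 by rewrite lt0r sqr_ge0 andbT sqrf_eq0.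
  move=> H; have := sqr_ge0 (Im z); lra.
have : 0 < Im z ^+ 2 by rewrite lt0r sqr_ge0 andbT sqrf_eq0.
move=> H; have := sqr_ge0 (Re z); lra.
Qed.
Lemma conjR (a : R) : conjc (a%:C) = a%:C.
Proof. by apply: C_ext; rewrite ?ReJ ?ImJ //= oppr0. Qed.
Lemma conjD (x y : C) : conjc (x + y) = conjc x + conjc y.
Proof. by case: x => a b; case: y => c d; apply: C_ext => /=; ring. Qed.
Lemma conjM (x y : C) : conjc (x * y) = conjc x * conjc y.
Proof. by case: x => a b; case: y => c d; apply: C_ext => /=; ring. Qed.
Lemma conjN (x : C) : conjc (- x) = - conjc x.
Proof. by case: x => a b; apply: C_ext => /=; ring. Qed.
Lemma conjK (x : C) : conjc (conjc x) = x.
Proof. by case: x => a b; apply: C_ext => /=; ring. Qed.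
Lemma conj0 : conjc (0 : C) = 0.
Proof. by apply: C_ext => /=; ring. Qed.
Lemma conjN1 : conjc (-1 : C) = -1.
Proof. by apply: C_ext => /=; ring. Qed.
End Cplx.

Section PreH.
Variable R : realType.
Local Notation C := R[i].
Local Notation Re := complex.Re.
Local Notation Im := complex.Im.

Record preH (V : lmodType C) (ip : V -> V -> C) (T : V -> Prop) : Prop := PreH {
  pT0 : T 0;
  pTl : forall a x y, T x -> T y -> T (a *: x + y);
  plin : forall a x y z, T x -> T y -> T z -> ip (a *: x + y) z = a * ip x z + ip y z;
  psym : forall x y, T x -> T y -> ip y x = conjc (ip x y);
  ppos : forall x, T x -> 0 <= ip x x }.

Variables (V : lmodType C) (ip : V -> V -> C) (T : V -> Prop).
Hypothesis P : preH ip T.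

Definition qf (x : V) : R := Re (ip x x).

Lemma T0 : T 0. Proof. exact: pT0 P. Qed.
Lemma TD x y : T x -> T y -> T (x + y).
Proof. by move=> hx hy; have := pTl P 1 hx hy; rewrite scale1r. Qed.
Lemma TZ a x : T x -> T (a *: x).
Proof. by move=> hx; rewrite -[_ *: _]addr0; apply: (pTl P) => //; apply: T0. Qed.
Lemma TN x : T x -> T (- x).
Proof. by move=> hx; rewrite -scaleN1r; apply: TZ. Qed.
Lemma TB x y : T x -> T y -> T (x - y).
Proof. by move=> hx hy; apply: TD => //; apply: TN. Qed.

Lemma ipD x y z : T x -> T y -> T z -> ip (x + y) z = ip x z + ip y z.
Proof. by move=> hx hy hz; have := plin P 1 hx hy hz; rewrite scale1r mul1r. Qed.
Lemma ipZ a x z : T x -> T z -> ip (a *: x) z = a * ip x z.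
Proof.
move=> hx hz; have t0 := T0.
rewrite -[_ *: _]addr0 (plin P) //.
have h0 : ip 0 z = 0.
  have := plin P 1 T0 T0 hz; rewrite scale1r addr0 mul1r => h.
  by apply: (@addrI _ (ip 0 z)); rewrite addr0 -h.
by rewrite h0 addr0.
Qed.
Lemma ip0l z : T z -> ip 0 z = 0.
Proof. move=> hz; rewrite -(scale0r (0 : V)) ipZ ?mul0r //; exact: T0. Qed.
Lemma ipN x z : T x -> T z -> ip (- x) z = - ip x z.
Proof. by move=> hx hz; rewrite -scaleN1r ipZ // mulN1r. Qed.
Lemma ipB x y z : T x -> T y -> T z -> ip (x - y) z = ip x z - ip y z.
Proof. by move=> hx hy hz; rewrite ipD ?ipN //; apply: TN. Qed.
Lemma ipDr x y z : T x -> T y -> T z -> ip z (x + y) = ip z x + ip z y.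
Proof.
move=> hx hy hz; rewrite (psym P (TD hx hy) hz) (ipD hx hy hz) conjD.
by rewrite -(psym P hx hz) -(psym P hy hz).
Qed.
Lemma ipZr a x z : T x -> T z -> ip z (a *: x) = conjc a * ip z x.
Proof.
move=> hx hz; rewrite (psym P (TZ a hx) hz) (ipZ a hx hz) conjM.
by rewrite -(psym P hx hz).
Qed.
Lemma ip0r z : T z -> ip z 0 = 0.
Proof. move=> hz; rewrite (psym P) ?ip0l ?conj0 //; exact: T0. Qed.
Lemma ipNr x z : T x -> T z -> ip z (- x) = - ip z x.
Proof. by move=> hx hz; rewrite -scaleN1r ipZr // conjN1 mulN1r. Qed.
Lemma ipBr x y z : T x -> T y -> T z -> ip z (x - y) = ip z x - ip z y.
Proof. by move=> hx hy hz; rewrite ipDr ?ipNr //; apply: TN. Qed.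

Lemma q_ge0 x : T x -> 0 <= qf x.
Proof. by move=> hx; have [_ ] := ge0C (ppos P hx). Qed.
Lemma ip_q x : T x -> ip x x = (qf x)%:C.
Proof. by move=> hx; apply: ge0C_real; apply: (ppos P). Qed.
Lemma ReipC x y : T x -> T y -> Re (ip y x) = Re (ip x y).
Proof. by move=> hx hy; rewrite (psym P) // ReJ. Qed.

Lemma qZ c x : T x -> qf (c *: x) = Re (conjc c * c) * qf x.
Proof.
move=> hx; rewrite /qf ipZ ?ipZr //; last exact: TZ.
by rewrite mulrA [c * _]mulrC ip_q // ReMR.
Qed.
Lemma qN x : T x -> qf (- x) = qf x.
Proof. move=> hx; rewrite -scaleN1r qZ // conjN1 mulN1r opprK mul1r /= ; lra. Qed.
Lemma qBC x y : T x -> T y -> qf (x - y) = qf (y - x).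
Proof. by move=> hx hy; rewrite -opprB qN //; apply: TB. Qed.
Lemma qB x y : T x -> T y -> qf (x - y) = qf x + qf y - 2 * Re (ip x y).
Proof.
move=> hx hy; rewrite /qf (ipB hx hy (TB hx hy)) (ipBr hx hy hx) (ipBr hx hy hy).
rewrite !(ReD, ReN) (ReipC hx hy); lra.
Qed.
Lemma qD x y : T x -> T y -> qf (x + y) = qf x + qf y + 2 * Re (ip x y).
Proof.
move=> hx hy; rewrite /qf (ipD hx hy (TD hx hy)) (ipDr hx hy hx) (ipDr hx hy hy).
rewrite !ReD (ReipC hx hy); lra.
Qed.
Lemma young x y : T x -> T y -> 2 * Re (ip x y) <= qf x + qf y.
Proof. move=> hx hy; have := q_ge0 (TB hx hy); rewrite qB //; lra. Qed.
Lemma ReipZr c x y : T x -> T y -> Re (ip x (c *: y)) = Re (conjc c * ip x y).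
Proof. by move=> hx hy; rewrite ipZr. Qed.
Lemma ReipRl (a : R) x y : T x -> T y -> Re (ip (a%:C *: x) y) = a * Re (ip x y).
Proof. by move=> hx hy; rewrite ipZ // mulrC ReMR mulrC. Qed.
Lemma young_d (d : R) x y : 0 < d -> T x -> T y ->
  2 * Re (ip x y) <= d * qf x + qf y / d.
Proof.
move=> d0 hx hy; have := young (TZ d%:C hx) hy.
rewrite ReipRl // qZ // conjR ReM /= => h.
have e : d * (qf y / d) = qf y by rewrite mulrC divfK // gt_eqF.
suff: d * (2 * Re (ip x y)) <= d * (d * qf x + qf y / d) by rewrite ler_pM2l.
rewrite mulrDr e; nra.
Qed.

Lemma ReJRM (a : R) (c z : C) : Re (conjc (a%:C * c) * z) = a * Re (conjc c * z).
Proof. by rewrite conjM conjR -mulrA mulrC ReMR mulrC. Qed.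

Lemma ReJRM2 (a : R) (c : C) :
  Re (conjc (a%:C * c) * (a%:C * c)) = a * (a * Re (conjc c * c)).
Proof.
case: c => u v; rewrite /= ; ring.
Qed.

Lemma small_zero y c : T y ->
  (forall e : R, 0 < e -> exists a, [/\ T a, qf a < e & ip a y = c]) -> c = 0.
Proof.
move=> hy H; have [//|nz] := eqVneq c 0.
set X := Re (conjc c * c); have X0 : 0 < X := ReJM_gt0 nz.
have qy0 := q_ge0 hy.
set l := 1 / (qf y + 1).
have l0 : 0 < l by rewrite /l divr_gt0 // ltr_wpDl.
have lq : l * (qf y + 1) = 1 by rewrite /l mul1r mulVf // gt_eqF // ltr_wpDl.
have [a [ha qa hac]] := H (l * X) (mulr_gt0 l0 X0).
have := young ha (TZ (l%:C * c) hy).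
rewrite ReipZr // hac qZ //.
have e1 : Re (conjc (l%:C * c) * c) = l * X by exact: ReJRM.
have e2 : Re (conjc (l%:C * c) * (l%:C * c)) = l * (l * X).
  exact: ReJRM2.
rewrite e1 e2 => h.
have lq' : l * qf y = 1 - l by move: lq; rewrite mulrDr mulr1 => lq; lra.
have e3 : l * (l * X) * qf y = l * X * (l * qf y) by ring.
rewrite e3 lq' in h.
have e4 : l * X * (1 - l) = l * X - l * X * l by ring.
rewrite e4 in h.
clearbody X l.
have : l * X * l <= 0 by lra.
by rewrite leNgt !mulr_gt0.
Qed.

Lemma q2 w : T w -> qf ((2 : C) *: w) = 4 * qf w.
Proof. move=> hw; rewrite qZ //; congr (_ * _); rewrite /=; ring. Qed.

Lemma vec_e1 (u a b : V) : (u - a) - (u - b) = b - a.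
Proof. by rewrite opprB addrC addrA subrK. Qed.
Lemma vec_e2 (u a b : V) : (u - a) + (u - b) = (2 : C) *: (u - (2 : C)^-1 *: (a + b)).
Proof.
rewrite scalerBr scalerA mulfV; last by rewrite pnatr_eq0.
by rewrite scale1r scaler_nat mulr2n opprD addrACA.
Qed.
Lemma vec_e3 (u a b : V) : (u - a) + (a - b) = u - b.
Proof. by rewrite addrA subrK. Qed.
Lemma vec_e4 (u a b : V) : u - (a + b) = (u - b) - a.
Proof. by rewrite opprD (addrC (- a)) addrA. Qed.
End PreH.

Lemma eventually_small (R : realType) (e : R) : 0 < e ->
  exists N, forall n, (N <= n)%N -> (n.+1%:R : R)^-1 < e.
Proof.
move=> e0; exists (Num.Def.archi_bound (e^-1)) => n hn.
rewrite -[e]invrK ltf_pV2 ?posrE ?invr_gt0 ?ltr0Sn //.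
apply: (lt_le_trans (archi_boundP _)); first by rewrite invr_ge0 ltW.
by rewrite ler_nat; apply: (leq_trans hn).
Qed.

Section Proj.
Variable R : realType.
Local Notation C := R[i].
Local Notation Re := complex.Re.
Local Notation Im := complex.Im.
Variables (V : lmodType C) (ip : V -> V -> C) (T : V -> Prop).
Hypothesis P : preH ip T.
Local Notation q := (qf ip).

Definition complete_on := forall u : nat -> V, (forall n, T (u n)) ->
  (forall e : R, 0 < e -> exists N, forall n m, (N <= n)%N -> (N <= m)%N -> q (u n - u m) < e) ->
  exists l, T l /\ forall e : R, 0 < e -> exists N, forall n, (N <= n)%N -> q (u n - l) < e.

Definition closed_in (S : V -> Prop) :=
  forall x, T x -> (forall e : R, 0 < e -> exists s, S s /\ q (x - s) < e) -> S x.

Lemma paral x y : T x -> T y -> q (x + y) + q (x - y) = 2 * q x + 2 * q y.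
Proof. move=> hx hy; rewrite (qD P hx hy) (qB P hx hy); lra. Qed.

Lemma proj_exists (S : V -> Prop) : complete_on ->
  (forall x, S x -> T x) -> S 0 -> (forall a x y, S x -> S y -> S (a *: x + y)) ->
  closed_in S -> forall u, T u -> exists w, S w /\ forall z, S z -> ip (u - w) z = 0.
Proof.
move=> cpl ST S0 Sl Scl u hu.
have SD x y : S x -> S y -> S (x + y) by move=> hx hy; have := Sl 1 _ _ hx hy; rewrite scale1r.
have SZ a x : S x -> S (a *: x) by move=> hx; have := Sl a _ _ hx S0; rewrite addr0.
pose E : R -> Prop := fun r => exists s, S s /\ r = q (u - s).
have hinf : has_inf E.
  split; first by exists (q (u - 0)), 0.
  by exists 0 => r [s [Ss ->]]; exact: (q_ge0 P (TB P hu (ST _ Ss))).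
pose d := inf E.
have dlow s : S s -> d <= q (u - s) by move=> Ss; apply: (ge_inf hinf.2); exists s.
have d0 : 0 <= d by apply: lb_le_inf hinf.1 _ => r [s [Ss ->]]; exact: (q_ge0 P (TB P hu (ST _ Ss))).
have ex_s n : exists s, S s /\ q (u - s) < d + (n.+1%:R)^-1.
  have [r [s [Ss ->]] hr] := inf_adherent (eps := (n.+1%:R : R)^-1) (E := E) ltac:(by rewrite invr_gt0 ltr0Sn) hinf.
  by exists s.
pose s n := epsilon (inhabits 0) (fun s => S s /\ q (u - s) < d + (n.+1%:R)^-1).
have hs n : S (s n) /\ q (u - s n) < d + (n.+1%:R)^-1 by apply: (epsilon_spec (inhabits 0) _ (ex_s n)).
have Ts n : T (s n) by apply: ST; case: (hs n).
have cb n m : q (s n - s m) <= 2 * (n.+1%:R)^-1 + 2 * (m.+1%:R)^-1.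
  have hx := TB P hu (Ts n); have hy := TB P hu (Ts m).
  have := paral hx hy; rewrite vec_e1 vec_e2.
  have Smid := SZ ((2:C)^-1) _ (SD _ _ (hs n).1 (hs m).1).
  have := dlow _ Smid; rewrite (q2 P (TB P hu (ST _ Smid))).
  rewrite (qBC P (Ts m) (Ts n)).
  have := (hs n).2; have := (hs m).2.
  move: (q (s n - s m)) (q (u - s n)) (q (u - s m)) (q (u - (2:C)^-1 *: (s n + s m))) => a b c e.
  clearbody d s; move: ((n.+1)%:R : R)^-1 ((m.+1)%:R : R)^-1 => i j; lra.
have cauchy : forall e : R, 0 < e -> exists N, forall n m, (N <= n)%N -> (N <= m)%N -> q (s n - s m) < e.
  move=> e e0; have [N hN] := @eventually_small _ (e / 4) ltac:(by rewrite divr_gt0).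
  exists N => n m hn hm; apply: (le_lt_trans (cb n m)).
  have := hN _ hn; have := hN _ hm.
  move: ((n.+1)%:R : R)^-1 ((m.+1)%:R : R)^-1 => i j; lra.
have [w [Tw hw]] := cpl s Ts cauchy.
have Sw : S w.
  apply: (Scl _ Tw) => e e0; have [N hN] := hw e e0; exists (s N); split; first exact: (hs N).1.
  by rewrite (qBC P Tw (Ts N)); apply: hN.
have wmin : q (u - w) <= d.
  apply/ler_addgt0Pr => eps eps0.
  pose dl := eps / (4 * (d + 1)).
  have dl0 : 0 < dl by rewrite divr_gt0 // mulr_gt0 // ltr_wpDl.
  have dle : dl * (d + 1) = eps / 4.
    have hd : d + 1 != 0 by rewrite gt_eqF // ltr_wpDl.
    by rewrite /dl; field; rewrite hd.
  pose K := 1 + dl^-1.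
  have K0 : 0 < K by rewrite /K ltr_wpDr // invr_ge0 ltW.
  have [N1 hN1] := @eventually_small _ (eps / 4) ltac:(by rewrite divr_gt0).
  have [N2 hN2] := hw (eps / (4 * K)) ltac:(by rewrite divr_gt0 // mulr_gt0).
  pose n := maxn N1 N2.
  have hn1 := hN1 n (leq_maxl _ _); have hn2 := hN2 n (leq_maxr _ _).
  have hta := TB P hu (Ts n); have htb := TB P (Ts n) Tw.
  rewrite -(vec_e3 u (s n) w) (qD P hta htb).
  have yg := young_d P dl0 hta htb.
  have qa := (hs n).2.
  have eta1 : (n.+1%:R : R)^-1 <= 1 by rewrite invf_le1 // ?ler1n // ltr0Sn.
  set i := ((n.+1)%:R : R)^-1 in qa eta1 hn1; clearbody i.
  have f1 : dl * q (u - s n) <= eps / 4.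
    rewrite -dle ler_wpM2l ?ltW //; lra.
  have f3 : K * q (s n - w) < eps / 4.
    move: hn2; rewrite ltr_pdivlMr ?mulr_gt0 // => h.
    rewrite ltr_pdivlMr ?ltr0n //.
    by have -> : K * q (s n - w) * 4 = q (s n - w) * (4 * K) by ring.
  have f2 : q (s n - w) / dl + q (s n - w) = K * q (s n - w) by rewrite /K; field; rewrite gt_eqF.
  move: yg f1 f2 f3 qa hn1 eta1.
  move: (q (u - s n)) (q (s n - w)) (Re (ip (u - s n) (s n - w))) => A B X.
  clearbody d dl K; move=> *; lra.
exists w; split=> // z Sz.
have Tz := ST _ Sz.
have [//|nz] := eqVneq (ip (u - w) z) 0.
set c := ip (u - w) z in nz *.
set X := Re (conjc c * c); have X0 : 0 < X := ReJM_gt0 nz.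
have qz0 := q_ge0 P Tz.
set l := 1 / (q z + 1).
have l0 : 0 < l by rewrite /l divr_gt0 // ltr_wpDl.
have lq : l * q z = 1 - l by rewrite /l mul1r -{2}(mulVf (x := q z + 1)) ?gt_eqF ?ltr_wpDl // mulrDr mulr1 addrK.
have Ss' := Sl (l%:C * c) _ _ Sz Sw.
have := le_trans wmin (dlow _ Ss').
have hx := TB P hu Tw; have htz := TZ P (l%:C * c) Tz.
rewrite vec_e4 (qB P hx htz) (qZ P _ Tz) (ipZr P _ Tz hx) -/c.
have e1 : Re (conjc (l%:C * c) * c) = l * X by exact: ReJRM.
have e2 : Re (conjc (l%:C * c) * (l%:C * c)) = l * (l * X) by exact: ReJRM2.
rewrite e1 e2.
have e3 : l * (l * X) * q z = l * X * (l * q z) by ring.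
rewrite e3 lq.
have e4 : l * X * (1 - l) = l * X - l * X * l by ring.
rewrite e4 => h.
clearbody X l.
have lX0 := mulr_gt0 l0 X0.
have : l * X * l <= 0 by lra.
by rewrite leNgt !mulr_gt0.
Qed.

Hypothesis Pdef : forall x, T x -> ip x x = 0 -> x = 0.

Lemma proj_unique (S : V -> Prop) :
  (forall x, S x -> T x) -> (forall a x y, S x -> S y -> S (a *: x + y)) ->
  forall u w1 w2, T u -> S w1 -> S w2 -> (forall z, S z -> ip (u - w1) z = 0) ->
  (forall z, S z -> ip (u - w2) z = 0) -> w1 = w2.
Proof.
move=> ST Sl u w1 w2 hu S1 S2 o1 o2.
have Sz : S (w2 - w1) by have := Sl (-1) _ _ S1 S2; rewrite scaleN1r addrC.
have Tz := ST _ Sz.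
have h : ip (w2 - w1) (w2 - w1) = 0.
  rewrite -{1}(vec_e1 u w1 w2) (ipB P (TB P hu (ST _ S1)) (TB P hu (ST _ S2)) Tz).
  by rewrite o1 // o2 // subrr.
by apply/eqP; rewrite eq_sym -subr_eq0; apply/eqP; apply: Pdef.
Qed.

Lemma perp_perp (S : V -> Prop) : complete_on ->
  (forall x, S x -> T x) -> S 0 -> (forall a x y, S x -> S y -> S (a *: x + y)) ->
  closed_in S -> forall x, T x ->
  (forall y, T y -> (forall s, S s -> ip y s = 0) -> ip x y = 0) -> S x.
Proof.
move=> cpl ST S0 Sl Scl x hx H.
have [p [Sp op]] := proj_exists cpl ST S0 Sl Scl hx.
have Tp := ST _ Sp; have Ty := TB P hx Tp.
have h1 : ip x (x - p) = 0 by apply: H => // s Ss; apply: op.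
have h2 : ip p (x - p) = 0 by rewrite (psym P Ty Tp) op // conj0.
have : ip (x - p) (x - p) = 0 by rewrite (ipB P hx Tp Ty) h1 h2 subrr.
move/(Pdef Ty)/eqP; rewrite subr_eq0 => /eqP ->; exact: Sp.
Qed.
End Proj.

Lemma orth_proj_spec (R : realType) (V : lmodType R[i]) (gip : V -> V -> R[i]) S u :
  (exists w, is_orth_proj gip S u w) -> is_orth_proj gip S u (orth_proj gip S u).
Proof. move=> h; exact: (epsilon_spec (inhabits 0) _ h). Qed.


Section Inst.
Variable R : realType.
Local Notation C := R[i].
Local Notation Re := complex.Re.

Lemma sqrt_lt (x e : R) : 0 < e -> (Num.sqrt x < e) = (x < e ^+ 2).
Proof. move=> e0; rewrite -{1}(ger0_norm (ltW e0)) -sqrtr_sqr ltr_sqrt // exprn_gt0 //. Qed.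

Lemma sq_half (e : R) : 0 < e -> 0 < (e / 2) ^+ 2.
Proof. by move=> e0; rewrite exprn_gt0 // divr_gt0. Qed.

Section OneH.
Variables (V : lmodType C) (ip : V -> V -> C).
Hypothesis hV : hilbert_ip ip.

Lemma hilbert_preH : preH ip (fun _ => True).
Proof. by case: hV => lin sym pos def _; constructor. Qed.
Lemma hilbert_def x : True -> ip x x = 0 -> x = 0.
Proof. by case: hV => _ _ _ def _ _; apply: def. Qed.
Lemma hilbert_complete : complete_on ip (fun _ => True).
Proof.
case: hV => _ _ _ _ cpl u _ hc.
have [l hl] : exists l, forall e : R, 0 < e -> exists N, forall n, (N <= n)%N -> ipnorm ip (u n - l) < e.
  apply: cpl => e e0; have [N hN] := hc _ (exprn_gt0 2 e0).
  by exists N => n m hn hm; rewrite /ipnorm sqrt_lt //; apply: hN.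
exists l; split => // e e0.
have [N hN] := hl (Num.sqrt e) ltac:(by rewrite sqrtr_gt0).
exists N => n hn; have := hN n hn; rewrite /ipnorm ltr_sqrt //.
Qed.
Lemma hq_ge0 x : 0 <= qf ip x.
Proof. exact: (q_ge0 hilbert_preH (x := x) I). Qed.
End OneH.
End Inst.

Section Graph.
Variable R : realType.
Local Notation C := R[i].
Local Notation Re := complex.Re.
Variables (V W : lmodType C) (ipV : V -> V -> C) (ipW : W -> W -> C).
Hypotheses (hV : hilbert_ip ipV) (hW : hilbert_ip ipW).
Variable A : op V W.
Hypothesis hA : dd_closed ipV ipW A.
Local Notation g := (graph_ip ipV ipW A).

Lemma dom_lin a x y : dom A x -> dom A y -> dom A (a *: x + y).
Proof. by case: hA => [[_ h] _ _ _]; apply: h. Qed.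
Lemma dom0 : dom A 0.
Proof. by case: hA => [[h _] _ _ _]. Qed.
Lemma dom_preH : preH (fun _ _ => 0 : C) (dom A).
Proof. constructor; [exact: dom0 | exact: dom_lin | by move=> *; rewrite mulr0 addr0 | by move=> *; rewrite conj0 | by []]. Qed.
Lemma domD x y : dom A x -> dom A y -> dom A (x + y). Proof. exact: (TD dom_preH). Qed.
Lemma domB x y : dom A x -> dom A y -> dom A (x - y). Proof. exact: (TB dom_preH). Qed.
Lemma domZ a x : dom A x -> dom A (a *: x). Proof. exact: (TZ dom_preH). Qed.
Lemma domN x : dom A x -> dom A (- x). Proof. exact: (TN dom_preH). Qed.

Lemma app_lin a x y : dom A x -> dom A y -> app A (a *: x + y) = a *: app A x + app A y.
Proof. by case: hA => _ h _ _; apply: h. Qed.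
Lemma app0 : app A 0 = 0.
Proof.
have := app_lin 1 dom0 dom0; rewrite !scale1r addr0 => h.
by apply: (@addrI _ (app A 0)); rewrite addr0 -h.
Qed.
Lemma appD x y : dom A x -> dom A y -> app A (x + y) = app A x + app A y.
Proof. by move=> hx hy; have := app_lin 1 hx hy; rewrite !scale1r. Qed.
Lemma appZ a x : dom A x -> app A (a *: x) = a *: app A x.
Proof. by move=> hx; have := app_lin a hx dom0; rewrite !addr0 app0 addr0. Qed.
Lemma appN x : dom A x -> app A (- x) = - app A x.
Proof. by move=> hx; rewrite -scaleN1r appZ // scaleN1r. Qed.
Lemma appB x y : dom A x -> dom A y -> app A (x - y) = app A x - app A y.
Proof. by move=> hx hy; rewrite appD ?appN //; apply: domN. Qed.

Lemma graph_preH : preH g (dom A).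
Proof.
case: hV => linV symV posV _ _; case: hW => linW symW posW _ _.
constructor; [exact: dom0 | exact: dom_lin | | | ].
- move=> a x y z hx hy hz; rewrite /graph_ip app_lin // linV linW; ring.
- by move=> x y hx hy; rewrite /graph_ip conjD symV symW.
- by move=> x hx; rewrite /graph_ip addr_ge0.
Qed.

Lemma graph_def x : dom A x -> g x x = 0 -> x = 0.
Proof.
case: hV => _ _ posV defV _; case: hW => _ _ posW _ _.
move=> hx h; have := paddr_eq0 (posV x) (posW (app A x)).
by rewrite /graph_ip in h; rewrite h eqxx => /esym/andP [/eqP h1 _]; apply: defV.
Qed.

Lemma graph_q x : qf g x = qf ipV x + qf ipW (app A x).
Proof. by rewrite /qf /graph_ip ReD. Qed.

Lemma closed_q x y : (forall e : R, 0 < e -> exists z, [/\ dom A z, qf ipV (x - z) < e & qf ipW (y - app A z) < e]) ->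
  dom A x /\ app A x = y.
Proof.
move=> H; case: hA => _ _ _ cl; apply: cl => e e0.
have [z [dz h1 h2]] := H _ (sq_half e0); exists z; split => //.
have : ipnorm ipV (x - z) < e / 2 by rewrite /ipnorm sqrt_lt // divr_gt0.
have : ipnorm ipW (y - app A z) < e / 2 by rewrite /ipnorm sqrt_lt // divr_gt0.
lra.
Qed.

Lemma graph_complete : complete_on g (dom A).
Proof.
move=> u du hc.
have PV := hilbert_preH hV; have PW := hilbert_preH hW.
have cV : forall e : R, 0 < e -> exists N, forall n m, (N <= n)%N -> (N <= m)%N -> qf ipV (u n - u m) < e.
  move=> e e0; have [N hN] := hc e e0; exists N => n m hn hm.
  have := hN n m hn hm; rewrite graph_q; have := hq_ge0 hW (app A (u n - u m)); lra.
have cW : forall e : R, 0 < e -> exists N, forall n m, (N <= n)%N -> (N <= m)%N -> qf ipW (app A (u n) - app A (u m)) < e.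
  move=> e e0; have [N hN] := hc e e0; exists N => n m hn hm.
  have := hN n m hn hm; rewrite graph_q appB //; have := hq_ge0 hV (u n - u m); lra.
have [x [_ hx]] := hilbert_complete hV (fun=> I) cV.
have [y [_ hy]] := hilbert_complete hW (fun=> I) cW.
have [dx ex] : dom A x /\ app A x = y.
  apply: closed_q => e e0.
  have [N1 hN1] := hx e e0; have [N2 hN2] := hy e e0.
  exists (u (maxn N1 N2)); split => //.
    by rewrite (qBC PV I I); apply: hN1; apply: leq_maxl.
  by rewrite (qBC PW I I); apply: hN2; apply: leq_maxr.
exists x; split => // e e0.
have e20 : 0 < e / 2 by rewrite divr_gt0.
have [N1 hN1] := hx _ e20; have [N2 hN2] := hy _ e20.
exists (maxn N1 N2) => n hn.
rewrite graph_q appB // ex.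
have := hN1 n (leq_trans (leq_maxl _ _) hn); have := hN2 n (leq_trans (leq_maxr _ _) hn); lra.
Qed.
End Graph.

Section Prod.
Variable R : realType.
Local Notation C := R[i].
Local Notation Re := complex.Re.
Variables (V W : lmodType C) (ipV : V -> V -> C) (ipW : W -> W -> C).
Hypotheses (hV : hilbert_ip ipV) (hW : hilbert_ip ipW).

Definition pip (p p' : V * W) : C := ipV p.1 p'.1 + ipW p.2 p'.2.

Lemma prod_preH : preH pip (fun _ => True).
Proof.
case: hV => linV symV posV _ _; case: hW => linW symW posW _ _.
constructor => //.
- by move=> a x y z _ _ _; rewrite /pip /= linV linW; ring.
- by move=> x y _ _; rewrite /pip conjD symV symW.
- by move=> x _; rewrite /pip addr_ge0.
Qed.

Lemma prod_def x : True -> pip x x = 0 -> x = 0.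
Proof.
case: hV => _ _ posV defV _; case: hW => _ _ posW defW _.
move=> _ h; have := paddr_eq0 (posV x.1) (posW x.2).
rewrite /pip in h; rewrite h eqxx => /esym/andP [/eqP h1 /eqP h2].
by case: x h1 h2 {h} => a b /= /defV -> /defW ->.
Qed.

Lemma prod_q x : qf pip x = qf ipV x.1 + qf ipW x.2.
Proof. by rewrite /qf /pip ReD. Qed.

Lemma prod_complete : complete_on pip (fun _ => True).
Proof.
move=> u _ hc.
have cV : forall e : R, 0 < e -> exists N, forall n m, (N <= n)%N -> (N <= m)%N -> qf ipV ((u n).1 - (u m).1) < e.
  move=> e e0; have [N hN] := hc e e0; exists N => n m hn hm.
  have := hN n m hn hm; rewrite prod_q /=; have := hq_ge0 hW ((u n).2 - (u m).2); lra.
have cW : forall e : R, 0 < e -> exists N, forall n m, (N <= n)%N -> (N <= m)%N -> qf ipW ((u n).2 - (u m).2) < e.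
  move=> e e0; have [N hN] := hc e e0; exists N => n m hn hm.
  have := hN n m hn hm; rewrite prod_q /=; have := hq_ge0 hV ((u n).1 - (u m).1); lra.
have [x [_ hx]] := hilbert_complete hV (fun=> I) cV.
have [y [_ hy]] := hilbert_complete hW (fun=> I) cW.
exists (x, y); split => // e e0.
have e20 : 0 < e / 2 by rewrite divr_gt0.
have [N1 hN1] := hx _ e20; have [N2 hN2] := hy _ e20.
exists (maxn N1 N2) => n hn; rewrite prod_q /=.
have := hN1 n (leq_trans (leq_maxl _ _) hn); have := hN2 n (leq_trans (leq_maxr _ _) hn); lra.
Qed.

Variable A : op V W.
Hypothesis hA : dd_closed ipV ipW A.

Lemma double_adj y z : (forall x p, adj_graph ipV ipW A x p -> ipV p y = ipW x z) ->
  dom A y /\ app A y = z.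
Proof.
move=> H.
have PV := hilbert_preH hV; have PW := hilbert_preH hW; have PP := prod_preH.
pose S := fun p : V * W => dom A p.1 /\ p.2 = app A p.1.
have S0 : S 0 by split; [exact: dom0 hA | rewrite (app0 hA)].
have Sl : forall a x y, S x -> S y -> S (a *: x + y).
  move=> a [x1 x2] [y1 y2] [/= d1 ->] [/= d2 ->]; split => /=; first exact: (dom_lin hA).
  by rewrite (app_lin hA).
have Scl : closed_in pip (fun _ => True) S.
  move=> [p1 p2] _ Hc; rewrite /S /=.
  suff [d1 e1] : dom A p1 /\ app A p1 = p2 by [].
  apply: (closed_q hA) => e e0.
  have [[s1 s2] [[/= ds ->] hs]] := Hc e e0; exists s1; split => //;
  move: hs; rewrite prod_q /=.
    by have := hq_ge0 hW (p2 - app A s1); lra.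
  by have := hq_ge0 hV (p1 - s1); lra.
have [w [Sw ow]] := proj_exists PP prod_complete (fun _ _ => I) S0 Sl Scl (u := (y, z)) I.
set r := (y, z) - w in ow.
have adj : adj_graph ipV ipW A r.2 (- r.1).
  move=> v dv; have := ow (v, app A v) (conj dv erefl); rewrite /pip /= => h.
  rewrite (psym PW I I) (ipNr PV I I) (psym PV I I).
  have -> : ipW r.2 (app A v) = - ipV r.1 v by apply/eqP; rewrite -addr_eq0 addrC h.
  by rewrite conjN.
have h1 := H _ _ adj.
have h2 : pip r r = 0.
  rewrite {1}/r (ipBr PP I I I) (ow w Sw) subr0 /pip /= -h1 (ipN PV I I); exact: subrr.
have := prod_def I h2; rewrite /r => /eqP; rewrite subr_eq0 => /eqP hw.
by move: Sw; rewrite -hw /S /= => -[? ->].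
Qed.
End Prod.

Section Pair.
Variable R : realType.
Local Notation C := R[i].
Local Notation Re := complex.Re.
Variables (V W : lmodType C) (ipV : V -> V -> C) (ipW : W -> W -> C).
Hypotheses (hV : hilbert_ip ipV) (hW : hilbert_ip ipW).
Variables (A : op V W) (B : op W V).
Hypotheses (hA : dd_closed ipV ipW A) (hB : dd_closed ipW ipV B).
Hypothesis hAB : forall y z, adj_graph ipW ipV B y z -> dom A y /\ app A y = - z.
Hypothesis hBA : forall y z, adj_graph ipV ipW A y z -> dom B y /\ app B y = - z.

Local Notation gA := (graph_ip ipV ipW A).
Local Notation Sb := (dom_neg_adj ipW ipV B).
Local Notation BDA := (BD ipV ipW A Sb).
Local Notation prA := (orth_proj gA BDA).

Let PV := hilbert_preH hV.
Let PW := hilbert_preH hW.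
Let PA := graph_preH hV hW hA.

Lemma Sb_domA y : Sb y -> dom A y.
Proof. by case=> z /hAB []. Qed.

Lemma BDA_domA u : BDA u -> dom A u.
Proof. by case. Qed.

Lemma BDA0 : BDA 0.
Proof. split; first exact: dom0 hA. by move=> y /Sb_domA dy; rewrite (ip0l PA). Qed.

Lemma BDA_lin a x y : BDA x -> BDA y -> BDA (a *: x + y).
Proof.
move=> [dx ox] [dy oy]; split; first exact: (dom_lin hA).
by move=> z Sz; rewrite (plin PA) // ?ox ?oy ?mulr0 ?addr0 //; apply: Sb_domA.
Qed.

Lemma BDA_closed : closed_in gA (dom A) BDA.
Proof.
move=> x dx H; split => // y Sy.
have dy := Sb_domA Sy.
apply: (small_zero PA dy) => e e0.
have [s [[ds os] hs]] := H e e0.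
exists (x - s); split => //; first exact: (domB hA).
by rewrite (ipB PA dx ds dy) (os y Sy) subr0.
Qed.

Lemma prA_spec u : dom A u -> is_orth_proj gA BDA u (prA u).
Proof.
move=> du; apply: orth_proj_spec.
have [w [Sw ow]] := proj_exists PA (graph_complete hV hW hA) BDA_domA BDA0 BDA_lin BDA_closed du.
by exists w.
Qed.

Lemma prA_BD u : dom A u -> BDA (prA u).
Proof. by move=> /prA_spec []. Qed.

Lemma prA_eq u w : dom A u -> is_orth_proj gA BDA u w -> prA u = w.
Proof.
move=> du [Sw ow]; have [S' o'] := prA_spec du.
exact: (proj_unique PA (graph_def hV hW (A:=A)) BDA_domA BDA_lin du S' Sw o' ow).
Qed.

Lemma prA_id u : BDA u -> prA u = u.
Proof.
move=> bu; have du := BDA_domA bu; apply: prA_eq => //; split => // z Sz.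
by rewrite subrr (ip0l PA) //; apply: BDA_domA.
Qed.

Lemma prA_zero y : Sb y -> prA y = 0.
Proof.
move=> Sy; have dy := Sb_domA Sy; apply: prA_eq => //; split; first exact: BDA0.
move=> z [dz oz]; rewrite subr0 (psym PA dz dy) (oz y Sy) conj0 //.
Qed.

Lemma Sb0 : Sb 0.
Proof. exists 0 => x dx; by rewrite (ip0r PV I) (ip0r PW I). Qed.

Lemma Sb_lin a x y : Sb x -> Sb y -> Sb (a *: x + y).
Proof.
move=> [zx hx] [zy hy]; exists (a *: zx + zy) => v dv.
by rewrite (ipDr PV I I I) (ipZr PV _ I I) (ipDr PW I I I) (ipZr PW _ I I) hx // hy.
Qed.

Lemma Sb_closed : closed_in gA (dom A) Sb.
Proof.
move=> x dx H; exists (- app A x) => v dv.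
have PP := prod_preH hV hW.
suff h0 : ipV x (app B v) + ipW (app A x) v = 0.
  have e1 : ipV (app B v) x = conjc (ipV x (app B v)) := psym PV I I.
  have e2 : ipW v (app A x) = conjc (ipW (app A x) v) := psym PW I I.
  rewrite e1 (ipNr PW I I) e2.
  have -> : ipV x (app B v) = - ipW (app A x) v by apply/eqP; rewrite -addr_eq0 h0.
  by rewrite conjN.
apply: (small_zero PP (y := (app B v, v)) I) => e e0.
have [s [[zs hs] qs]] := H e e0.
have ds := Sb_domA (ex_intro _ zs hs).
have [_ Gs] := hAB hs.
have os : ipV s (app B v) + ipW (app A s) v = 0.
  have e1 : ipV s (app B v) = conjc (ipV (app B v) s) := psym PV I I.
  have e2 : ipW zs v = conjc (ipW v zs) := psym PW I I.
  by rewrite e1 (hs v dv) -e2 Gs (ipN PW I I) addrN.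
exists (x - s, app A (x - s)); split => //.
rewrite /pip /= (appB hA dx ds) (ipB PW I I I) (ipB PV I I I).
apply/eqP; rewrite -subr_eq0; apply/eqP.
have -> : ipV x (app B v) - ipV s (app B v) + (ipW (app A x) v - ipW (app A s) v) -
  (ipV x (app B v) + ipW (app A x) v) = - (ipV s (app B v) + ipW (app A s) v) by ring.
by rewrite os oppr0.
Qed.

Lemma prA_perp u : dom A u -> Sb (u - prA u).
Proof.
move=> du; have [Sp op] := prA_spec du.
apply: (perp_perp PA (graph_def hV hW (A:=A)) (graph_complete hV hW hA) Sb_domA Sb0 Sb_lin Sb_closed).
  by apply: (domB hA) => //; apply: BDA_domA.
by move=> y dy oy; apply: op; split.
Qed.

Lemma BDA_char u : BDA u -> dom B (app A u) /\ app B (app A u) = u.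
Proof.
move=> [du ou]; apply: (double_adj hW hV hB) => x p hxp.
have [dx Ax] := hAB hxp.
have := ou x (ex_intro _ p hxp); rewrite /graph_ip Ax (ipNr PW I I) => h.
have h2 : ipW (app A u) p = ipV u x by apply/eqP; rewrite eq_sym -subr_eq0 h.
by rewrite (psym PW I I) h2 -(psym PV I I).
Qed.

Lemma BDA_intro u : dom A u -> dom B (app A u) -> app B (app A u) = u -> BDA u.
Proof.
move=> du dB eB; split => // y [z hz].
have [dy Ay] := hAB hz.
rewrite /graph_ip Ay (ipNr PW I I) -{1}eB (hz _ dB); exact: subrr.
Qed.
End Pair.

Section Main.
Variable R : realType.
Local Notation C := R[i].
Local Notation Re := complex.Re.
Variables (H0 H1 H : lmodType C) (ip0 : H0 -> H0 -> C) (ip1 : H1 -> H1 -> C) (ipH : H -> H -> C).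
Hypotheses (hip0 : hilbert_ip ip0) (hip1 : hilbert_ip ip1) (hipH : hilbert_ip ipH).
Variables (G : op H0 H1) (D : op H1 H0).
Hypotheses (hG : dd_closed ip0 ip1 G) (hD : dd_closed ip1 ip0 D).
Hypothesis hGD : neg_adj_sub ip0 ip1 G D.
Variable kappa : H0 -> H.
Hypothesis hk : bounded_on_BDG ip0 ip1 ipH G D kappa.

Let P0 := hilbert_preH hip0.
Let P1 := hilbert_preH hip1.
Let PH := hilbert_preH hipH.
Local Notation gG := (graph_ip ip0 ip1 G).
Local Notation gD := (graph_ip ip1 ip0 D).
Let PG := graph_preH hip0 hip1 hG.
Let PD := graph_preH hip1 hip0 hD.
Local Notation BG := (BDG ip0 ip1 G D).
Local Notation BDd := (BDD ip0 ip1 G D).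

Lemma hDG y z : adj_graph ip1 ip0 D y z -> dom G y /\ app G y = - z.
Proof.
move=> hyz; apply: (double_adj hip0 hip1 hG) => x p hxp.
have [dx Dx] := hGD hxp.
have := hyz x dx; rewrite Dx (ipN P0 I I) => h.
by rewrite (ipNr P1 I I) -h opprK.
Qed.

Lemma BG_dom u : BG u -> dom G u. Proof. by case. Qed.
Lemma BG0 : BG 0. Proof. exact: (BDA0 hip0 hip1 hG hDG). Qed.
Lemma BG_lin c x y : BG x -> BG y -> BG (c *: x + y).
Proof. exact: (BDA_lin hip0 hip1 hG hDG). Qed.
Lemma BGB x y : BG x -> BG y -> BG (x - y).
Proof. by move=> hx hy; have := BG_lin (-1) hy hx; rewrite scaleN1r addrC. Qed.
Lemma BGZ c x : BG x -> BG (c *: x).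
Proof. by move=> hx; have := BG_lin c hx BG0; rewrite addr0. Qed.

Lemma kappa_lin c x y : BG x -> BG y -> kappa (c *: x + y) = c *: kappa x + kappa y.
Proof. by case: hk => h _; apply: h. Qed.
Lemma kappa0 : kappa 0 = 0.
Proof.
have := kappa_lin 1 BG0 BG0; rewrite !scale1r addr0 => h.
by apply: (@addrI _ (kappa 0)); rewrite addr0 -h.
Qed.
Lemma kappaB x y : BG x -> BG y -> kappa (x - y) = kappa x - kappa y.
Proof. by move=> hx hy; have := kappa_lin (-1) hy hx; rewrite !scaleN1r addrC [- _ + _]addrC. Qed.

Lemma kbound : exists c : R, 0 <= c /\ forall x, BG x -> qf ipH (kappa x) <= c * qf gG x.
Proof.
case: hk => _ [c0 hc]; exists (c0 ^+ 2); split; first exact: sqr_ge0.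
move=> x bx; have h := hc x bx; rewrite /ipnorm in h.
have q1 := hq_ge0 hipH (kappa x); have q2 := q_ge0 PG (BG_dom bx).
have e1 := sqr_sqrtr q1; have e2 := sqr_sqrtr q2.
have s1 := sqrtr_ge0 (qf ipH (kappa x)); have s2 := sqrtr_ge0 (qf gG x).
rewrite /qf in e1 e2 s1 s2 q1 q2 *.
move: h e1 e2 s1 s2 q1 q2.
move: (Num.sqrt (Re (ipH (kappa x) (kappa x)))) (Num.sqrt (Re (gG x x))) => a b.
move: (Re (ipH (kappa x) (kappa x))) (Re (gG x x)) => A B h e1 e2 s1 s2 q1 q2.
rewrite -e1 -e2; nra.
Qed.

Lemma riesz psi : exists w, BG w /\ forall u, BG u -> ipH (kappa u) psi = gG u w.
Proof.
pose L x := ipH (kappa x) psi.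
have Llin c x y : BG x -> BG y -> L (c *: x + y) = c * L x + L y.
  by move=> hx hy; rewrite /L kappa_lin // (plin PH).
have L0 : L 0 = 0 by rewrite /L kappa0 (ip0l PH).
have LB x y : BG x -> BG y -> L (x - y) = L x - L y.
  by move=> hx hy; rewrite /L kappaB // (ipB PH).
case: (classic (exists x0, BG x0 /\ L x0 <> 0)) => [[x0 [b0 L0nz]]|none]; last first.
  exists 0; split; first exact: BG0.
  move=> u bu; rewrite (ip0r PG (BG_dom bu)).
  by apply: NNPP => nz; apply: none; exists u.
pose N x := BG x /\ L x = 0.
have NT x : N x -> dom G x by case=> /BG_dom.
have N0 : N 0 by split; [exact: BG0 | exact: L0].
have Nl c x y : N x -> N y -> N (c *: x + y).
  by move=> [bx lx] [hby ly]; split; [exact: BG_lin | rewrite Llin // lx ly mulr0 addr0].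
have Ncl : closed_in gG (dom G) N.
  move=> x dx Hx.
  have bx : BG x.
    apply: (BDA_closed hip0 hip1 hG hDG) => // e e0.
    by have [s [[bs _] hs]] := Hx e e0; exists s.
  split => //.
  have [c [c0 hc]] := kbound.
  apply: (small_zero PH (y := psi) I) => e e0.
  have ec0 : 0 < e / (c + 1) by rewrite divr_gt0 // ltr_wpDl.
  have [s [[bs ls] hs]] := Hx _ ec0.
  exists (kappa (x - s)); split => //.
    apply: (le_lt_trans (hc _ (BGB bx bs))).
    have q0 := q_ge0 PG (domB hG dx (BG_dom bs)).
    have : c * qf gG (x - s) <= c * (e / (c + 1)) by rewrite ler_wpM2l // ltW.
    have : c * (e / (c + 1)) < e.
      rewrite mulrA ltr_pdivrMr ?ltr_wpDl //; nra.
    lra.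
  by have := LB x s bx bs; rewrite ls subr0.
have [p [Np op]] := proj_exists PG (graph_complete hip0 hip1 hG) NT N0 Nl Ncl (BG_dom b0).
pose x1 := x0 - p.
have b1 : BG x1 by apply: BGB => //; case: Np.
have Lx1 : L x1 = L x0 by rewrite /x1 LB //; [case: Np => _ ->; rewrite subr0 | case: Np].
have d1 := BG_dom b1.
pose g11 := gG x1 x1.
have g11nz : g11 != 0.
  apply/eqP => h; apply: L0nz; rewrite -Lx1.
  by rewrite (graph_def hip0 hip1 d1 h) L0.
exists (conjc (L x1 / g11) *: x1); split; first exact: BGZ.
move=> u bu; have du := BG_dom bu.
rewrite (ipZr PG _ d1 du) conjK.
pose y := L u *: x1 - L x1 *: u.
have hby : BG y by apply: BGB; apply: BGZ.
have Ny : N y.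
  split => //; rewrite /y LB; [|exact: BGZ|exact: BGZ].
  have e1 : forall c z, BG z -> L (c *: z) = c * L z.
    by move=> c z bz; have := Llin c z 0 bz BG0; rewrite addr0 L0 addr0.
  by rewrite !e1 // mulrC subrr.
have h := op y Ny; rewrite -/x1 in h.
have dy := BG_dom hby.
have h2 : gG y x1 = 0 by rewrite (psym PG d1 dy) h conj0.
move: h2; rewrite /y (ipB PG (domZ hG _ d1) (domZ hG _ du) d1) (ipZ PG _ d1 d1) (ipZ PG _ du d1) -/g11 => h2.
have h3 : L u * g11 = L x1 * gG u x1 by apply/eqP; rewrite -subr_eq0 h2.
apply: (mulIf g11nz); rewrite h3; field.
by rewrite g11nz.
Qed.

Local Notation kadj := (kappa_adj ip0 ip1 ipH G D kappa).
Local Notation pG := (projG ip0 ip1 G D).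
Local Notation pD := (projD ip0 ip1 G D).

Lemma kadj_spec psi : BG (kadj psi) /\ forall u, BG u -> ipH (kappa u) psi = gG u (kadj psi).
Proof.
have [w hw] := riesz psi; rewrite /kappa_adj.
exact: (epsilon_spec (inhabits (0 : H0)) (fun w => BG w /\ forall u, BG u -> ipH (kappa u) psi = gG u w) (ex_intro _ w hw)).
Qed.

Lemma pG_BD v : dom G v -> BG (pG v).
Proof. exact: (prA_BD hip0 hip1 hG hDG). Qed.
Lemma pG_zero y : dom_neg_adj ip1 ip0 D y -> pG y = 0.
Proof. exact: (prA_zero hip0 hip1 hG hDG). Qed.
Lemma pG_id v : BG v -> pG v = v.
Proof. exact: (prA_id hip0 hip1 hG hDG). Qed.
Lemma pD_BD f : dom D f -> BDd (pD f).
Proof. exact: (prA_BD hip1 hip0 hD hGD). Qed.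
Lemma BG_char u : BG u -> dom D (app G u) /\ app D (app G u) = u.
Proof. exact: (BDA_char hip0 hip1 hD hDG). Qed.
Lemma BDd_char f : BDd f -> dom G (app D f) /\ app G (app D f) = f.
Proof. exact: (BDA_char hip1 hip0 hG hGD). Qed.
Lemma G_BDd u : BG u -> BDd (app G u).
Proof.
move=> bu; have [d1 e1] := BG_char bu.
apply: (BDA_intro hip0 hGD) => //; rewrite e1 //; exact: BG_dom.
Qed.
Lemma D_BG f : BDd f -> BG (app D f).
Proof.
move=> bf; have [d1 e1] := BDd_char bf.
apply: (BDA_intro hip1 hDG) => //; rewrite e1 //; by case: bf.
Qed.

Lemma ibp f v : dom D f -> dom G v ->
  ip1 f (app G v) + ip0 (app D f) v = gD (pD f) (app G (pG v)).
Proof.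
move=> df dv.
have bf := pD_BD df; have bv := pG_BD dv.
have dpf : dom D (pD f) by case: bf.
have dpv : dom G (pG v) by case: bv.
have [p hp] := prA_perp hip1 hip0 hD hGD df.
have [dfp Dfp] := hGD hp.
have E1 : ip1 (f - pD f) (app G v) + ip0 (app D (f - pD f)) v = 0.
  have e1 : ip1 (f - pD f) (app G v) = conjc (ip1 (app G v) (f - pD f)) := psym P1 I I.
  have e2 : ip0 p v = conjc (ip0 v p) := psym P0 I I.
  by rewrite e1 (hp v dv) -e2 Dfp (ipN P0 I I) subrr.
have [z hz] := prA_perp hip0 hip1 hG hDG dv.
have [dvz Gvz] := hDG hz.
have E2 : ip1 (pD f) (app G (v - pG v)) + ip0 (app D (pD f)) (v - pG v) = 0.
  by rewrite Gvz (hz _ dpf) (ipNr P1 I I) addNr.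
have [_ E3] := BG_char bv.
move: E1 E2; rewrite (appB hD df dpf) (appB hG dv dpv) (ipB P1 I I I) (ipB P0 I I I).
rewrite (ipBr P1 I I I) (ipBr P0 I I I) => E1 E2.
rewrite /graph_ip E3.
apply/eqP; rewrite -subr_eq0; apply/eqP.
set a1 := ip1 f (app G v); set a2 := ip1 (pD f) (app G v).
set a3 := ip0 (app D f) v; set a4 := ip0 (app D (pD f)) v.
set a5 := ip1 (pD f) (app G (pG v)); set a6 := ip0 (app D (pD f)) (pG v).
have -> : a1 + a3 - (a5 + a6) = (a1 - a2 + (a3 - a4)) + (a2 - a5 + (a4 - a6)) by ring.
by rewrite E1 E2 addr0.
Qed.

Lemma psi_side psi v : dom G v ->
  ipH psi (kappa (pG v)) = gD (app G (kadj psi)) (app G (pG v)).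
Proof.
move=> dv; have [bw hw] := kadj_spec psi; have bv := pG_BD dv.
have dw := BG_dom bw; have dpv := BG_dom bv.
have e1 : ipH psi (kappa (pG v)) = conjc (ipH (kappa (pG v)) psi) := psym PH I I.
rewrite e1 (hw _ bv) -(psym PG dpv dw).
have [_ Ew] := BG_char bw; have [_ Ev] := BG_char bv.
by rewrite /graph_ip Ew Ev addrC.
Qed.

Lemma main_equiv (a : H1 -> H1) (m : H0 -> H0) phi psi :
  DtN_graph_H ip0 ip1 ipH G D a m kappa phi psi <->
  exists u : H0, [/\ dom G u, kappa (pG u) = phi &
     forall v : H0, dom G v -> ip1 (a (app G u)) (app G v) + ip0 (m u) v = ipH psi (kappa (pG v))].
Proof.
split.
  move=> [u0 [bu0 ku0 [u [du dDa hm pu ppD]]]].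
  exists u; split => //; first by rewrite pu.
  move=> v dv.
  have -> : m u = app D (a (app G u)) by apply/eqP; rewrite -subr_eq0 hm.
  by rewrite ibp // ppD psi_side.
move=> [u [du ju hb]].
set f := a (app G u).
have [df Df] : dom D f /\ app D f = m u.
  apply: (double_adj hip1 hip0 hD) => x p hxp.
  have [dx Gx] := hDG hxp.
  have := hb x dx.
  rewrite (pG_zero (ex_intro _ p hxp)) kappa0 (ip0r PH I) Gx (ipNr P1 I I) -/f => h.
  have h2 : ip0 (m u) x = ip1 f p by apply/eqP; rewrite -subr_eq0 addrC h.
  have e1 : ip1 p f = conjc (ip1 f p) := psym P1 I I.
  have e2 : ip0 x (m u) = conjc (ip0 (m u) x) := psym P0 I I.
  by rewrite e1 e2 h2.
have [bw _] := kadj_spec psi.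
set w := kadj psi in bw *.
have epf : pD f = app G w.
  pose d := pD f - app G w.
  have bd : BDd d.
    have := BDA_lin hip1 hip0 hD hGD (-1) (G_BDd bw) (pD_BD df).
    by rewrite scaleN1r addrC.
  have bv := D_BG bd; have dv := BG_dom bv.
  have pv : pG (app D d) = app D d := pG_id bv.
  have [_ GDd] := BDd_char bd.
  have := hb _ dv; rewrite -Df -/f ibp // psi_side // pv GDd => h.
  have dd : dom D d by case: bd.
  have dpf : dom D (pD f) by case: (pD_BD df).
  have dGw : dom D (app G w) by case: (G_BDd bw).
  have h0 : gD d d = 0 by rewrite {1}/d (ipB PD dpf dGw dd) h subrr.
  have := graph_def hip1 hip0 dd h0; rewrite /d => /eqP; rewrite subr_eq0 => /eqP //.
exists (pG u); split => //; first exact: pG_BD.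
exists u; split => //; first by rewrite Df subrr.
Qed.
End Main.

Unset Implicit Arguments.
Local Close Scope complex_scope.

Theorem proposition5p10 (R : realType) (H0 H1 H : lmodType R[i])
  (ip0 : H0 -> H0 -> R[i]) (ip1 : H1 -> H1 -> R[i]) (ipH : H -> H -> R[i])
  (hip0 : hilbert_ip ip0) (hip1 : hilbert_ip ip1) (hipH : hilbert_ip ipH)
  (G : op H0 H1) (D : op H1 H0)
  (hG : dd_closed ip0 ip1 G) (hD : dd_closed ip1 ip0 D)
  (hGD : neg_adj_sub ip0 ip1 G D)
  (m : {linear H0 -> H0}) (hm : bounded_op ip0 m)
  (a : {linear H1 -> H1}) (ha : bounded_op ip1 a) (hac : coercive ip1 a)
  (kappa : H0 -> H) (hk : bounded_on_BDG ip0 ip1 ipH G D kappa)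
  (hkinj : forall x y, BDG ip0 ip1 G D x -> BDG ip0 ip1 G D y -> kappa x = kappa y -> x = y)
  (hkdense : dense ipH (fun h => exists x, BDG ip0 ip1 G D x /\ kappa x = h)) :
  let j := fun u : H0 => kappa (projG ip0 ip1 G D u) in
  let b := fun u v : H0 => ip1 (a (app G u)) (app G v) + ip0 (m u) v in
  forall phi psi : H,
    DtN_graph_H ip0 ip1 ipH G D a m kappa phi psi <->
    exists u : H0, [/\ dom G u, j u = phi &
                       forall v : H0, dom G v -> b u v = ipH psi (j v)].
Proof.
move=> j b phi psi.
exact: (main_equiv hip0 hip1 hipH hG hD hGD hk a m phi psi).
Qed.
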